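(* Let $m>0$ and let $f\colon\mathbb{C}\mathbb{P}^m\to\mathbb{C}\mathbb{P}^N$ be an algebraic morphism given by $[x]\mapsto[f_0(x),\dots,f_N(x)]$, where $f_0,\dots,f_N$ are linearly independent homogeneous polynomials of degree $d$. If $f$ is projectively $k$-regular, then $d\ge k-1$.
   Context: A map $f\colon\mathbb{C}\mathbb{P}^m\to\mathbb{C}\mathbb{P}^N$ is projectively $k$-regular if the images of any $k$ distinct points span a $(k-1)$-dimensional projective linear subspace. *)

(* Defs.v *)
From HB Require Import structures.
From mathcomp Require Import all_boot all_order all_algebra.
From mathcomp Require Import reals.
From mathcomp Require Import complex.
From mathcomp Require Import mpoly.
Set Implicit Arguments. Unset Strict Implicit. Unset Printing Implicit Defensive.
Import Order.TTheory GRing.Theory Num.Theory.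
Local Open Scope ring_scope.

(* The complex numbers: C = R[i] for R : realType. A point of C^(m+1) is a
   function 'I_(m+1) -> C; a point of CP^m is represented by a nonzero one. *)

Definition distinct_proj_points {C : fieldType} {n : nat} (x y : 'I_n -> C) : Prop :=
  \rank (\matrix_(i < 2, j < n) (if i == ord0 then x j else y j)) = 2%N.

Definition polymap_eval {C : comRingType} {n N : nat}
  (f : 'I_N.+1 -> {mpoly C[n]}) (x : 'I_n -> C) : 'I_N.+1 -> C :=
  fun j => (f j).@[x].

Definition is_proj_morphism {C : fieldType} {m N : nat} (d : nat)
  (f : 'I_N.+1 -> {mpoly C[m.+1]}) : Prop :=
  (forall j, f j \is d.-homog) /\
  (forall x : 'I_m.+1 -> C, (exists i, x i != 0) ->
     exists j, polymap_eval f x j != 0).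

Definition polys_lin_indep {C : fieldType} {n N : nat}
  (f : 'I_N.+1 -> {mpoly C[n]}) : Prop :=
  forall c : 'I_N.+1 -> C, \sum_(j < N.+1) c j *: f j = 0 -> forall j, c j = 0.

(* Projectively k-regular: the images of any k distinct points span a
   (k-1)-dimensional projective subspace, i.e. the k image vectors in
   C^(N+1) are linearly independent (the k x (N+1) matrix has rank k). *)
Definition proj_k_regular {C : fieldType} {m N : nat} (k : nat)
  (f : 'I_N.+1 -> {mpoly C[m.+1]}) : Prop :=
  forall x : 'I_k -> ('I_m.+1 -> C),
    (forall a b : 'I_k, a != b -> distinct_proj_points (x a) (x b)) ->
    \rank (\matrix_(a < k, j < N.+1) polymap_eval f (x a) j) = k.

(* Main.v *)
Require Import Defs.
From HB Require Import structures.
From mathcomp Require Import all_boot all_order all_algebra.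
From mathcomp Require Import reals complex mpoly ring.
Import Order.TTheory GRing.Theory Num.Theory.
Local Open Scope ring_scope.

Section Aux.
Variable (C : fieldType) (n : nat) (i1 : 'I_n) (w : 'I_n -> C).

Definition Wm (mm : 'X_{1..n}) : C := \prod_(l | l != i1) (w l) ^+ (mm l).
Definition cf (p : {mpoly C[n]}) (i : nat) : C :=
  \sum_(mm <- msupp p) (if mm i1 == i then p@_mm * Wm mm else 0).
Definition vpt (a : C) : 'I_n -> C := fun l => if l == i1 then a else w l.

Lemma eval_line d (p : {mpoly C[n]}) (a : C) :
  p \is d.-homog ->
  p.@[vpt a] = \sum_(i < d.+1) a ^+ i * cf p i.
Proof.
move=> hp; rewrite mevalE /cf.
under [RHS]eq_bigr => i _ do rewrite mulr_sumr.
rewrite exchange_big /= !big_seq; apply: eq_bigr => mm hmm.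
have hd : (mm i1 < d.+1)%N.
  have := dhomog_mf hp hmm; rewrite /= => <-; rewrite ltnS mdegE (bigD1 i1) //=; exact: leq_addr.
rewrite [RHS](bigD1 (Ordinal hd)) //= eqxx [X in _ + X]big1 ?addr0; last first.
  move=> i hi; case: (mm i1 =P i :> nat) => [h|_]; last by rewrite mulr0.
  by exfalso; move/eqP: hi; apply; apply: val_inj; rewrite /= h.
rewrite (bigD1 i1) //= /vpt eqxx /Wm mulrCA; congr (_ * (_ * _)).
by apply: eq_bigr => l /negbTE ->.
Qed.
End Aux.
Arguments vpt {C n}.
Arguments cf {C n}.
Arguments Wm {C n}.
Arguments eval_line {C n}.
Lemma distinct2 (C : fieldType) n (i0 i1 : 'I_n) (x y : 'I_n -> C) :
  i0 != i1 -> x i0 = 1 -> y i0 = 1 -> x i1 != y i1 -> distinct_proj_points x y.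
Proof.
move=> h01 hx hy hxy; rewrite /distinct_proj_points.
set A := \matrix_(i < 2, j < n) _.
set al := x i1; set be := y i1.
have hba : be - al != 0 by rewrite subr_eq0 eq_sym.
pose dl (r s : 'I_2) : C := (r == s)%:R.
pose b1 (s : 'I_2) := (dl 1 s - dl 0 s) / (be - al).
pose b0 (s : 'I_2) := dl 0 s - al * b1 s.
pose B : 'M[C]_(n, 2) := \matrix_(l, s) (if l == i0 then b0 s else if l == i1 then b1 s else 0).
have AB : A *m B = 1%:M.
  apply/matrixP => r s; rewrite !mxE (bigD1 i0) //= (bigD1 i1) 1?eq_sym //=.
  rewrite big1 ?addr0; last first.
    by move=> l /andP [h1 h0]; rewrite !mxE (negbTE h0) (negbTE h1) mulr0.
  have h10 : i1 != i0 by rewrite eq_sym.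
  rewrite !mxE eqxx (negbTE h10) eqxx.
  rewrite /b0 /b1 /dl /al /be.
  case: r => [[|[|//]]] hr; case: s => [[|[|//]]] hs /=;
   rewrite ?hx ?hy /=; field; exact: hba.
apply/eqP; rewrite eqn_leq rank_leq_row /=.
by have := mxrankM_maxl A B; rewrite AB mxrank1.
Qed.

Theorem lemma6p5 (R : realType) (m N d k : nat)
  (f : 'I_N.+1 -> {mpoly (R[i])[m.+1]}) :
  (0 < m)%N ->
  is_proj_morphism d f ->
  polys_lin_indep f ->
  proj_k_regular k f ->
  (k.-1 <= d)%N.
Proof.
move=> hm [hom _] _ hreg.
pose i0 : 'I_m.+1 := ord0.
pose i1 : 'I_m.+1 := inord 1.
have h01 : i0 != i1.
  by apply/eqP => /(congr1 val); rewrite /= inordK // ltnS.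
pose w : 'I_m.+1 -> R[i] := fun l => if l == i0 then 1 else 0.
pose x : 'I_k -> ('I_m.+1 -> R[i]) := fun a => vpt i1 w (a%:R).
have hx : forall a b : 'I_k, a != b -> distinct_proj_points (x a) (x b).
  move=> a b hab; apply: (@distinct2 _ _ i0 i1 (x a) (x b) h01).
  - by rewrite /x /vpt (negbTE h01) /w eqxx.
  - by rewrite /x /vpt (negbTE h01) /w eqxx.
  - by rewrite /x /vpt !eqxx eqr_nat.
have := hreg x hx.
pose V : 'M[R[i]]_(k, d.+1) := \matrix_(a, i) ((a%:R : R[i]) ^+ i).
pose Cm : 'M[R[i]]_(d.+1, N.+1) := \matrix_(i, j) cf i1 w (f j) i.
have -> : \matrix_(a < k, j < N.+1) polymap_eval f (x a) j = V *m Cm.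
  apply/matrixP => a j; rewrite !mxE /polymap_eval /x (eval_line i1 w _ _ _ (hom j)).
  by apply: eq_bigr => i _; rewrite !mxE.
move=> hk; have := leq_trans (mxrankM_maxl V Cm) (rank_leq_col V).
by rewrite hk; case: k {hreg x hx V hk} => //.
Qed.
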